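(* Let $J\subseteq S$, and define the relation $\Theta$ on $\mathfrak{S}_n^J$ by $(w,w')\in\Theta$ if and only if $\Pi_\downarrow^J(w)=\Pi_\downarrow^J(w')$. Then $\Theta$ is a lattice congruence on the lattice $\mathrm{Weak}(\mathfrak{S}_n^J)=[e,w_\circ^J]$, and the corresponding quotient lattice is (isomorphic to) $\mathcal{T}_n^J$, the set $\mathfrak{S}_n^J(231)$ ordered by $\le_S$.
   Context: $\mathfrak{S}_n$ is the symmetric group on $[n]$, $s_i=(i,i+1)$, $S=\{s_1,\dots,s_{n-1}\}$, one-line notation $w=w_1\cdots w_n$, $\mathrm{inv}(w)=\{(i,j):i<j,\ w_i>w_j\}$, weak order $u\le_S v\iff\mathrm{inv}(u)\subseteq\mathrm{inv}(v)$. For $J\subseteq S$, $\mathfrak{S}_n^J$ is the set of $w$ with $w_i<w_{i+1}$ whenever $s_i\in J$; with the restricted order it is the weak order interval $[e,w_\circ^J]$, where $w_\circ^J$ is the longest element of $\mathfrak{S}_n^J$, and in particular a lattice. Writing $J=S\setminus\{s_{j_1},\dots,s_{j_r}\}$ with $j_1<\dots<j_r$, the $J$-regions are $\{1,\dots,j_1\},\{j_1+1,\dots,j_2\},\dots,\{j_r+1,\dots,n\}$. $\mathfrak{S}_n^J(231)$ is the set of $w\in\mathfrak{S}_n^J$ admitting no indices $i<j<k$ in pairwise different $J$-regions with $w_k<w_i<w_j$ and $w_i=w_k+1$. For $w\in\mathfrak{S}_n^J$, $\Pi_\downarrow^J(w)$ is the unique greatest element of $\mathfrak{S}_n^J(231)$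 that is $\le_S w$ (it exists). A lattice congruence on a lattice $L$ is an equivalence relation $\Theta$ such that $x\,\Theta\,y$ implies $(x\wedge z)\,\Theta\,(y\wedge z)$ and $(x\vee z)\,\Theta\,(y\vee z)$ for all $z\in L$; $L/\Theta$ is the lattice of classes with induced operations. *)

(* Defs.v *)
From mathcomp Require Import all_boot all_fingroup.
Set Implicit Arguments. Unset Strict Implicit. Unset Printing Implicit Defensive.

(* Conventions (0-based): positions and values of w : 'S_n are in 'I_n = {0..n-1};
   the one-line notation is w_1..w_n shifted by one (w_{p+1} - 1 = w p).
   The simple generator s_{k+1} (k : 'I_n.-1) swaps positions k and k+1;
   J : {set 'I_n.-1} is a subset of S = {s_1,...,s_{n-1}} via k |-> s_{k+1}. *)

Section Defs.
Variable n : nat.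
Implicit Types (J : {set 'I_n.-1}) (u v w x y z m p q t : 'S_n).

Definition weak_le u v : bool :=
  [forall i : 'I_n, forall j : 'I_n, (i < j) && (u j < u i) ==> (v j < v i)].

Definition parabolic J w : bool :=
  [forall k in J, forall i : 'I_n, forall j : 'I_n,
     (val i == val k) && (val j == (val k).+1) ==> (w i < w j)].

Definition sepJ J (p q : nat) : bool :=
  [exists k : 'I_n.-1, (p <= k) && (k < q) && (k \notin J)].

Definition avoid231 J w : bool :=
  ~~ [exists i : 'I_n, exists j : 'I_n, exists k : 'I_n,
        [&& i < j, j < k, sepJ J i j, sepJ J j k, sepJ J i k,
            w k < w i, w i < w j & (val (w i) == (val (w k)).+1)]].

Definition T231 J w : bool := parabolic J w && avoid231 J w.

Definition isPiDown J w p : bool :=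
  [&& T231 J p, weak_le p w &
      [forall q, T231 J q && weak_le q w ==> weak_le q p]].

Definition PiDown J w : option 'S_n := [pick p | isPiDown J w p].

Definition Theta J w w' : bool := PiDown J w == PiDown J w'.

Definition isMeet J x y m : bool :=
  [&& parabolic J m, weak_le m x, weak_le m y &
      [forall z, parabolic J z && weak_le z x && weak_le z y ==> weak_le z m]].
Definition isJoin J x y m : bool :=
  [&& parabolic J m, weak_le x m, weak_le y m &
      [forall z, parabolic J z && weak_le x z && weak_le y z ==> weak_le m z]].

End Defs.

(* Main.v *)
Require Import Defs.
From mathcomp Require Import all_boot all_fingroup zify.
Set Implicit Arguments. Unset Strict Implicit. Unset Printing Implicit Defensive.


Section Basic.
Variable n : nat.
Implicit Types (u v w t c : 'S_n).

Definition ninv u (a b : 'I_n) : bool := (a < b) && (u b < u a).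

Lemma weak_leP u v :
  reflect (forall a b : 'I_n, ninv u a b -> ninv v a b) (weak_le u v).
Proof.
apply: (iffP forallP) => [H a b /andP[ab uab] | H a].
  by have /forallP/(_ b)/implyP := H a; rewrite ab uab /ninv ab => /(_ isT).
apply/forallP => b; apply/implyP => /andP[ab uab].
by have /andP[] := H a b (introT andP (conj ab uab)).
Qed.

Lemma weak_le_refl u : weak_le u u.
Proof. by apply/weak_leP. Qed.

Lemma weak_le_trans u v w : weak_le u v -> weak_le v w -> weak_le u w.
Proof. by move=> /weak_leP H1 /weak_leP H2; apply/weak_leP => a b /H1/H2. Qed.

Lemma perm_neq u (a b : 'I_n) : a != b -> (u a : nat) != u b.
Proof.
move=> ab; apply/negP => /eqP E; move/negP: ab; apply; apply/eqP.
by apply: (@perm_inj _ u); apply: val_inj.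
Qed.

Lemma perm_lt_total u (a b : 'I_n) : a != b -> (u a < u b) || (u b < u a).
Proof. by move/(perm_neq u); rewrite neq_ltn. Qed.

Lemma inv_ltF u v (a b : 'I_n) : weak_le u v -> a < b -> v a < v b -> u a < u b.
Proof.
move=> /weak_leP H ab vab.
have ne : a != b by rewrite neq_ltn ab.
case/orP: (perm_lt_total u ne) => // uba.
have := H a b; rewrite /ninv ab uba /= => /(_ isT) vba.
by move: (ltn_trans vab vba); rewrite ltnn.
Qed.

Lemma card_lt_ord (m : nat) : m <= n -> #|[set v : 'I_n | v < m]| = m.
Proof.
move=> mn.
have -> : [set v : 'I_n | v < m] = widen_ord mn @: [set: 'I_m].
  apply/setP => v; rewrite !inE; apply/idP/imsetP => [vm | [x _ ->]].
    by exists (Ordinal vm) => //; apply: val_inj.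
  exact: ltn_ord x.
have wi : injective (widen_ord mn) by move=> x1 y1 E; apply: val_inj; exact: (congr1 val E).
by rewrite (card_imset _ wi) cardsT card_ord.
Qed.

Lemma rank_perm u (a : 'I_n) : val (u a) = #|[set b | u b < u a]|.
Proof.
rewrite -(card_imset _ (@perm_inj _ u)).
have -> : u @: [set b | u b < u a] = [set v : 'I_n | v < u a].
  apply/setP => v; rewrite inE; apply/imsetP/idP => [[x] | H].
    by rewrite inE => H ->.
  by exists ((u^-1)%g v); rewrite ?inE permKV.
rewrite card_lt_ord //; exact: ltnW (ltn_ord _).
Qed.

Lemma weak_le_anti u v : weak_le u v -> weak_le v u -> u = v.
Proof.
move=> /weak_leP H1 /weak_leP H2; apply/permP => a; apply: val_inj.
rewrite (rank_perm u a) (rank_perm v a); apply: eq_card => b; rewrite !inE.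
case: (ltngtP a b) => [ab | ba | /val_inj ->]; last by rewrite !ltnn.
- have ne : a != b by rewrite neq_ltn ab.
  have [ua|ua] := orP (perm_lt_total u ne); have [va|va] := orP (perm_lt_total v ne).
  + by rewrite ltnNge (ltnW ua) ltnNge (ltnW va).
  + by have := H2 a b; rewrite /ninv ab va ltnNge (ltnW ua) => /(_ isT).
  + by have := H1 a b; rewrite /ninv ab ua ltnNge (ltnW va) => /(_ isT).
  + by rewrite ua va.
- have ne : b != a by rewrite neq_ltn ba.
  have [ua|ua] := orP (perm_lt_total u ne); have [va|va] := orP (perm_lt_total v ne).
  + by rewrite ua va.
  + by have := H2 b a; rewrite /ninv ba va ltnNge (ltnW ua) => /(_ isT).
  + by have := H1 b a; rewrite /ninv ba ua ltnNge (ltnW va) => /(_ isT).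
  + by rewrite ltnNge (ltnW ua) ltnNge (ltnW va).
Qed.

End Basic.


Section Regions.
Variable n : nat.
Variable J : {set 'I_n.-1}.
Implicit Types (u v w t c : 'S_n).

Definition regS (p : nat) := [set k : 'I_n.-1 | (k < p) && (k \notin J)].
Definition reg (p : nat) := #|regS p|.

Lemma sepJ_reg p q : sepJ J p q = (reg p < reg q).
Proof.
apply/existsP/idP => [[k /andP[/andP[pk kq] kJ]] | H].
  apply: proper_card; apply/properP; split.
    apply/subsetP => x; rewrite !inE => /andP[xp ->]; rewrite andbT.
    by apply: (leq_trans xp); apply: (leq_trans pk); apply: ltnW.
  by exists k; rewrite !inE ?kq ?kJ //= ltnNge pk.
have : ~~ (regS q \subset regS p).
  by apply/negP => /subset_leq_card; rewrite leqNgt H.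
case/subsetPn => k; rewrite !inE => /andP[kq kJ].
rewrite kJ andbT -leqNgt => pk.
by exists k; rewrite pk kq kJ.
Qed.

Lemma reg_mono (p q : nat) : p <= q -> reg p <= reg q.
Proof.
move=> pq; apply: subset_leq_card; apply/subsetP => x; rewrite !inE.
by case/andP => xp ->; rewrite (leq_trans xp pq).
Qed.

Lemma reg_lt (p q : nat) : reg p < reg q -> p < q.
Proof. by move=> H; rewrite ltnNge; apply/negP => /reg_mono; rewrite leqNgt H. Qed.

Definition adjJ (a b : 'I_n) : bool :=
  [exists k in J, (val a == val k) && (val b == (val k).+1)].

Lemma parabolic_adj w a b : parabolic J w -> adjJ a b -> w a < w b.
Proof.
move=> /forall_inP H /exists_inP[k kJ E].
by have /forallP/(_ a)/forallP/(_ b)/implyP := H k kJ; apply.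
Qed.

Lemma adj_parabolic w : (forall a b, adjJ a b -> w a < w b) -> parabolic J w.
Proof.
move=> H; apply/forall_inP => k kJ; apply/forallP => a; apply/forallP => b.
by apply/implyP => E; apply: H; apply/exists_inP; exists k.
Qed.

Lemma adj_lt a b : adjJ a b -> a < b.
Proof. by case/exists_inP => k _ /andP[/eqP -> /eqP ->]. Qed.

Lemma perm1_parabolic : parabolic J (1%g : 'S_n).
Proof. by apply: adj_parabolic => a b /adj_lt; rewrite !perm1. Qed.

Definition bad w (i j k : 'I_n) := [&& i < j, j < k, reg i < reg j, reg j < reg k,
  w k < w i, w i < w j & val (w i) == (w k).+1].

Lemma badP w : ~~ avoid231 J w -> exists i j k : 'I_n, bad w i j k.
Proof.
rewrite negbK => /existsP[i /existsP[j /existsP[k]]].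
rewrite !sepJ_reg => /andP[ij /andP[jk /andP[rij /andP[rjk /andP[_ /andP[wki /andP[wij E]]]]]]].
by exists i, j, k; rewrite /bad ij jk rij rjk wki wij E.
Qed.

Lemma avoidF w (i j k : 'I_n) : avoid231 J w -> i < j -> j < k ->
  reg i < reg j -> reg j < reg k -> w k < w i -> w i < w j ->
  val (w i) = (w k).+1 -> False.
Proof.
move=> /negP H ij jk rij rjk wki wij E; apply: H.
apply/existsP; exists i; apply/existsP; exists j; apply/existsP; exists k.
by rewrite !sepJ_reg ij jk rij rjk (ltn_trans rij rjk) wki wij E eqxx.
Qed.

Definition swp w (i k : 'I_n) : 'S_n := (w * tperm (w i) (w k))%g.

Lemma tperm_val (x y z : 'I_n) :
  val (tperm x y z) = if val z == val x then val y else if val z == val y then val x else val z.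
Proof.
case: (tpermP x y z) => [-> | -> | /eqP zx /eqP zy].
- by rewrite eqxx.
- by case: eqP => [-> | _]; rewrite ?eqxx.
- by rewrite val_eqE (negPf zx) val_eqE (negPf zy).
Qed.

Lemma tperm_lt (x y a b : 'I_n) : val x = (val y).+1 ->
  ~~ ((a == x) && (b == y)) -> ~~ ((a == y) && (b == x)) ->
  (tperm x y b < tperm x y a) = (b < a).
Proof.
move=> E H1 H2; rewrite !tperm_val E.
move: H1 H2; rewrite -!val_eqE.
case/nandP => /eqP H1; case/nandP => /eqP H2;
repeat case: ifP => /eqP ?; apply/idP/idP => ?; simpl in *; lia.
Qed.

Lemma swp_inv w (i k a b : 'I_n) : val (w i) = (w k).+1 -> i < k ->
  ~~ ((a == i) && (b == k)) -> ninv (swp w i k) a b = ninv w a b.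
Proof.
move=> E ik H; rewrite /ninv /swp; case ab: (a < b) => //=.
rewrite !permM; apply: tperm_lt => //.
  by rewrite !(inj_eq (@perm_inj _ w)).
rewrite !(inj_eq (@perm_inj _ w)); apply/negP => /andP[/eqP ak /eqP bi].
by move: ab; rewrite ak bi ltnNge (ltnW ik).
Qed.

Lemma swp_ik w (i k : 'I_n) : val (w i) = (w k).+1 -> i < k ->
  ninv (swp w i k) i k = false.
Proof.
move=> E ik; rewrite /ninv /swp ik !permM tpermL tpermR /=.
by rewrite E ltnNge leqnSn.
Qed.

Lemma swp_le w (i k : 'I_n) : val (w i) = (w k).+1 -> i < k ->
  weak_le (swp w i k) w.
Proof.
move=> E ik; apply/weak_leP => a b.
case H: ((a == i) && (b == k)).
  by case/andP: H => /eqP -> /eqP ->; rewrite swp_ik.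
by rewrite swp_inv ?H.
Qed.

Definition Ninv w := #|[set p : 'I_n * 'I_n | ninv w p.1 p.2]|.

Lemma swp_N w (i k : 'I_n) : val (w i) = (w k).+1 -> i < k ->
  Ninv (swp w i k) < Ninv w.
Proof.
move=> E ik; apply: proper_card; apply/properP; split.
  apply/subsetP => p; rewrite !inE; have /weak_leP := swp_le E ik; apply.
exists (i, k); rewrite !inE /= ?swp_ik //.
by rewrite /ninv ik E ltnSn.
Qed.

Lemma swp_parabolic w (i k : 'I_n) : val (w i) = (w k).+1 -> i < k ->
  reg i < reg k -> parabolic J w -> parabolic J (swp w i k).
Proof.
move=> E ik rik Pw; apply: adj_parabolic => a b adj.
have ab := adj_lt adj.
case H: ((a == i) && (b == k)).
  case/andP: H => /eqP ai /eqP bk; subst a b.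
  case/exists_inP: adj => k0 k0J /andP[/eqP E1 /eqP E2].
  move: rik; rewrite -sepJ_reg => /existsP[k1 /andP[/andP[l1 l2] k1J]].
  have k10 : k1 = k0 by apply: val_inj; move: l1 l2; rewrite E1 E2 /=; lia.
  by move: k1J; rewrite k10 k0J.
have wab := parabolic_adj Pw adj.
have := swp_inv E ik (negbT H); rewrite /ninv ab /= [w b < w a]ltnNge (ltnW wab) /= => Hs.
have ne : a != b by rewrite neq_ltn ab.
by case/orP: (perm_lt_total (swp w i k) ne) => //; rewrite Hs.
Qed.

End Regions.


Section PiDown.
Variable n : nat.
Variable J : {set 'I_n.-1}.
Implicit Types (u v w t c : 'S_n).
Local Notation reg := (reg J).

Lemma T_between t : avoid231 J t -> forall d (i j k : 'I_n), t i - t k <= d ->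
  i < j -> j < k -> reg i < reg j -> reg j < reg k -> t k < t i -> t i < t j ->
  exists p : 'I_n, [/\ reg p = reg j, t k < t p & t p < t i].
Proof.
move=> Ht; elim=> [|d IH] i j k Hd ij jk rij rjk tki tij.
  by exfalso; lia.
case E: (val (t i) == (t k).+1).
  by exfalso; apply: (avoidF Ht ij jk rij rjk tki tij (eqP E)).
have vn : (t k).+1 < n by have := ltn_ord (t i); simpl in *; lia.
set p := (t^-1)%g (Ordinal vn).
have tp : val (t p) = (t k).+1 by rewrite /p permKV.
have tpi : t p < t i by rewrite tp; move/negbT/eqP: E => E; simpl in *; lia.
case: (ltngtP (reg p) (reg j)) => [rpj | rjp | rpj].
- have tkp : t k < t p by rewrite tp.
  by exfalso; apply: (avoidF Ht (reg_lt rpj) jk rpj rjk tkp (ltn_trans tpi tij) tp).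
- have Hd' : t i - t p <= d by rewrite tp; simpl in *; lia.
  have [q [rq tpq tqi]] := IH i j p Hd' ij (reg_lt rjp) rij rjp tpi tij.
  by exists q; split => //; simpl in *; lia.
- by exists p; split => //; rewrite tp.
Qed.

Lemma isPiDownP w p : isPiDown J w p <->
  [/\ T231 J p, weak_le p w & forall q, T231 J q -> weak_le q w -> weak_le q p].
Proof.
split => [/and3P[H1 H2 /forallP H3] | [H1 H2 H3]].
  by split => // q Tq qw; have /implyP := H3 q; apply; rewrite Tq qw.
by apply/and3P; split => //; apply/forallP => q; apply/implyP => /andP[]; apply: H3.
Qed.

Lemma bad_unpack w i j k : bad J w i j k ->
  [/\ i < j, j < k, reg i < reg j, reg j < reg k &
   [/\ w k < w i, w i < w j & val (w i) = (w k).+1]].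
Proof.
by case/andP => ij /andP[jk /andP[rij /andP[rjk /andP[wki /andP[wij /eqP E]]]]].
Qed.

Lemma cover_T t w i j k : avoid231 J t -> weak_le t w -> bad J w i j k ->
  weak_le t (swp w i k).
Proof.
move=> Ht tw /bad_unpack[ij jk rij rjk [wki wij E]].
have ik := ltn_trans ij jk.
have claim : ~~ (t k < t i).
  apply/negP => tki.
  have tij : t i < t j := inv_ltF tw ij wij.
  have [p [rp tkp tpi]] := T_between Ht (leqnn _) ij jk rij rjk tki tij.
  have ip : i < p by apply: (reg_lt (J:=J)); rewrite rp.
  have pk : p < k by apply: (reg_lt (J:=J)); rewrite rp.
  have /weak_leP H := tw.
  have := H i p; rewrite /ninv ip tpi => /(_ isT) /= wpi.
  have := H p k; rewrite /ninv pk tkp => /(_ isT) /= wkp.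
  simpl in *; lia.
apply/weak_leP => a b Hab.
case H: ((a == i) && (b == k)).
  by case/andP: H Hab => /eqP -> /eqP ->; rewrite /ninv (negPf claim) andbF.
rewrite swp_inv ?H //.
by have /weak_leP := tw; apply.
Qed.

Lemma pi_exists_aux N w : Ninv w <= N -> parabolic J w -> exists p, isPiDown J w p.
Proof.
elim: N w => [|N IH] w HN Pw; case Hav: (avoid231 J w).
- exists w; apply/isPiDownP; split; rewrite /T231 ?Pw ?Hav ?weak_le_refl //.
- have [i [j [k B]]] := badP (negbT Hav).
  have [ij jk _ _ [_ _ E]] := bad_unpack B.
  by have := swp_N E (ltn_trans ij jk); lia.
- exists w; apply/isPiDownP; split; rewrite /T231 ?Pw ?Hav ?weak_le_refl //.
- have [i [j [k B]]] := badP (negbT Hav).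
  have [ij jk rij rjk [_ _ E]] := bad_unpack B.
  have ik := ltn_trans ij jk.
  have Nc := swp_N E ik.
  have Pc := swp_parabolic E ik (ltn_trans rij rjk) Pw.
  have [p /isPiDownP[Tp pc Hp]] := IH (swp w i k) ltac:(lia) Pc.
  exists p; apply/isPiDownP; split => //.
    exact: weak_le_trans pc (swp_le E ik).
  move=> q Tq qw; apply: Hp => //.
  by apply: cover_T B => //; case/andP: Tq.
Qed.

Lemma pi_exists w : parabolic J w -> exists p, isPiDown J w p.
Proof. exact: pi_exists_aux (leqnn _). Qed.

Lemma isPiDown_uniq w p p' : isPiDown J w p -> isPiDown J w p' -> p = p'.
Proof.
move=> /isPiDownP[T1 l1 H1] /isPiDownP[T2 l2 H2].
by apply: weak_le_anti; [apply: H2 | apply: H1].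
Qed.

Definition pi w := odflt w (PiDown J w).

Lemma pi_spec w : parabolic J w -> isPiDown J w (pi w).
Proof.
move=> Pw; rewrite /pi /PiDown; case: pickP => [p Hp //|H].
by have [p Hp] := pi_exists Pw; move: (H p); rewrite Hp.
Qed.

Lemma PiDown_some w : parabolic J w -> PiDown J w = Some (pi w).
Proof.
move=> Pw; have := pi_spec Pw; rewrite /pi /PiDown.
by case: pickP => [p Hp //|H] /=; rewrite H.
Qed.

Lemma ThetaE x y : parabolic J x -> parabolic J y -> Theta J x y = (pi x == pi y).
Proof.
by move=> Px Py; rewrite /Theta (PiDown_some Px) (PiDown_some Py) inj_eq //; move=> ? ? [].
Qed.

Lemma pi_T w : parabolic J w -> T231 J (pi w).
Proof. by move/pi_spec/isPiDownP => []. Qed.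
Lemma pi_le w : parabolic J w -> weak_le (pi w) w.
Proof. by move/pi_spec/isPiDownP => []. Qed.
Lemma pi_max w q : parabolic J w -> T231 J q -> weak_le q w -> weak_le q (pi w).
Proof. by move/pi_spec/isPiDownP => [] _ _; apply. Qed.
Lemma pi_par w : parabolic J w -> parabolic J (pi w).
Proof. by move/pi_T/andP => []. Qed.

Lemma pi_id t : T231 J t -> pi t = t.
Proof.
move=> Tt; have Pt : parabolic J t by case/andP: Tt.
apply: isPiDown_uniq (pi_spec Pt) _.
by apply/isPiDownP; split => //; apply: weak_le_refl.
Qed.

Lemma pi_mono x y : parabolic J x -> parabolic J y -> weak_le x y -> weak_le (pi x) (pi y).
Proof.
move=> Px Py xy; apply: pi_max => //; first exact: pi_T.
exact: weak_le_trans (pi_le Px) xy.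
Qed.

Lemma pi_swp w i j k : parabolic J w -> bad J w i j k -> pi (swp w i k) = pi w.
Proof.
move=> Pw B; have [ij jk rij rjk [_ _ E]] := bad_unpack B.
have ik := ltn_trans ij jk.
have Pc := swp_parabolic E ik (ltn_trans rij rjk) Pw.
apply: weak_le_anti.
  exact: pi_mono Pc Pw (swp_le E ik).
apply: pi_max => //; first exact: pi_T.
apply: cover_T B; last exact: pi_le.
by case/andP: (pi_T Pw).
Qed.

End PiDown.


Section JoinConstr.
Variable n : nat.
Variables x y : 'S_n.

Definition Rj : rel 'I_n := fun p q => (p < q) && ((x q < x p) || (y q < y p)).
Definition TC (p q : 'I_n) := (p < q) && connect Rj p q.

Lemma path_lt (p : 'I_n) s : path Rj p s -> s != [::] -> p < last p s.
Proof.
elim: s p => [//|a s IH] p /= /andP[/andP[pa _] Hs] _.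
case: s IH Hs => [|b s] IH Hs //=.
exact: ltn_trans pa (IH a Hs isT).
Qed.

Lemma TC_min (S : rel 'I_n) : (forall a b c, S a b -> S b c -> S a c) ->
  (forall a b, Rj a b -> S a b) -> forall a b, TC a b -> S a b.
Proof.
move=> St SR a b /andP[ab /connectP[s Hp Eb]].
have : s != [::] by case: s Hp Eb => //= Hp Eb; move: ab; rewrite Eb ltnn.
rewrite Eb {ab Eb}; elim: s a Hp => [//|c s IH] a /= /andP[Rac Hs] _.
case: s IH Hs => [|d s] IH Hs /=; first exact: SR.
exact: St (SR _ _ Rac) (IH c Hs isT).
Qed.

Lemma TC_trans (a b c : 'I_n) : TC a b -> TC b c -> TC a c.
Proof.
move=> /andP[ab cab] /andP[bc cbc]; rewrite /TC (ltn_trans ab bc).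
exact: connect_trans cab cbc.
Qed.

Lemma Rj_TC (a b : 'I_n) : Rj a b -> TC a b.
Proof. by move=> H; rewrite /TC (connect1 H); case/andP: H => ->. Qed.

Lemma perm_co (z : 'S_n) (a m c : 'I_n) : a != m -> z c < z a -> (z m < z a) || (z c < z m).
Proof.
move=> am zca; case/orP: (perm_lt_total z am) => [zam | ->]; last by [].
by rewrite (ltn_trans zca zam) orbT.
Qed.

Lemma TC_co_aux s (a : 'I_n) : path Rj a s -> forall m : 'I_n, a < m -> m < last a s ->
  TC a m || TC m (last a s).
Proof.
elim: s a => [|c s IH] a /=; first by move=> _ m am ma; move: (ltn_trans am ma); rewrite ltnn.
move=> /andP[Rac Hs] m am ml.
have mlast : m < last c s by [].
case: (ltngtP m c) => [mc | cm | mc].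
- have am' : a != m by rewrite neq_ltn am.
  have Hmc : TC m (last c s) -> TC m (last c s) by [].
  case/andP: (Rac) => ac /orP[xca | yca].
    case/orP: (perm_co am' xca) => [xma | xcm].
      by rewrite Rj_TC // /Rj am xma.
    apply/orP; right; rewrite /TC mlast; apply/connectP; exists (c :: s) => //=.
    by rewrite Hs andbT /Rj mc xcm.
  case/orP: (perm_co am' yca) => [yma | ycm].
    by rewrite Rj_TC // /Rj am yma orbT.
  apply/orP; right; rewrite /TC mlast; apply/connectP; exists (c :: s) => //=.
  by rewrite Hs andbT /Rj mc ycm orbT.
- case/orP: (IH c Hs m cm ml) => [/andP[_ ccm] | -> //]; last by rewrite orbT.
  by rewrite /TC am (connect_trans (connect1 Rac) ccm).
- have -> : m = c by apply: val_inj.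
  by rewrite Rj_TC.
Qed.

Lemma TC_co (a m b : 'I_n) : a < m -> m < b -> TC a b -> TC a m || TC m b.
Proof.
move=> am mb /andP[ab /connectP[s Hp Eb]].
by rewrite Eb; apply: TC_co_aux => //; rewrite -Eb.
Qed.

Definition ltv (a b : 'I_n) := if a < b then ~~ TC a b else if b < a then TC b a else false.

Lemma ltv_irr (a : 'I_n) : ltv a a = false.
Proof. by rewrite /ltv ltnn. Qed.

Lemma ltv_total (a b : 'I_n) : a != b -> ltv a b || ltv b a.
Proof.
rewrite /ltv neq_ltn => /orP[ab | ba].
  by rewrite ab ltnNge (ltnW ab) /=; case: (TC a b).
by rewrite ba ltnNge (ltnW ba) /=; case: (TC b a).
Qed.

Lemma ltv_trans (a b c : 'I_n) : ltv a b -> ltv b c -> ltv a c.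
Proof.
rewrite /ltv; case: (ltngtP a b) => ab; case: (ltngtP b c) => bc //;
  case: (ltngtP a c) => ac //; try (exfalso; lia); move=> H1 H2.
- apply/negP => H3.
  by case/orP: (TC_co ab bc H3) => H; [move/negP: H1 | move/negP: H2].
- apply/negP => H3; move/negP: H1; apply; exact: TC_trans H3 H2.
- case/orP: (TC_co ac ab H2) => // H; by move/negP: H1.
- have E : a = c by apply: val_inj.
  by subst; move/negP: H1.
- apply/negP => H3; move/negP: H2; apply; exact: TC_trans H1 H3.
- case/orP: (TC_co bc ac H1) => // H; by move/negP: H2.
- have E : a = c by apply: val_inj.
  by subst; move/negP: H2.
- exact: TC_trans H2 H1.
Qed.

Definition rank (p : 'I_n) := #|[set q | ltv q p]|.

Lemma rank_lt (p : 'I_n) : rank p < n.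
Proof.
have n0 : 0 < n by case: p => /= p pn; apply: leq_ltn_trans pn.
rewrite /rank; apply: (@leq_ltn_trans #|[set~ p]|).
  apply: subset_leq_card; apply/subsetP => q; rewrite !inE.
  by apply: contraL => /eqP ->; rewrite ltv_irr.
by rewrite cardsC1 card_ord; case: n n0.
Qed.

Lemma rank_mono (a b : 'I_n) : ltv a b -> rank a < rank b.
Proof.
move=> ab; apply: proper_card; apply/properP; split.
  by apply/subsetP => q; rewrite !inE => qa; apply: ltv_trans qa ab.
by exists a; rewrite !inE ?ab ?ltv_irr.
Qed.

Definition jfun (p : 'I_n) : 'I_n := Ordinal (rank_lt p).

Lemma jinj : injective jfun.
Proof.
move=> a b E; apply/eqP; apply/negPn/negP => ab.
have E' : rank a = rank b by move: (congr1 val E).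
case/orP: (ltv_total ab) => /rank_mono; rewrite E' ltnn //.
Qed.

Definition jperm : 'S_n := perm jinj.

Lemma jperm_inv (a b : 'I_n) : ninv jperm a b = TC a b.
Proof.
rewrite /ninv !permE /=.
case ab: (a < b); last by rewrite /TC ab.
case H: (TC a b).
  by apply: rank_mono; rewrite /ltv ltnNge (ltnW ab) /= ab.
apply/negbTE; rewrite -leqNgt; apply: ltnW; apply: rank_mono.
by rewrite /ltv ab H.
Qed.

End JoinConstr.

Section Join.
Variable n : nat.
Variable J : {set 'I_n.-1}.
Implicit Types (u v w t x y z m : 'S_n).
Local Notation reg := (reg J).

Definition SJ x y m := [/\ weak_le x m, weak_le y m &
  forall S : rel 'I_n, (forall a b c, S a b -> S b c -> S a c) ->
    (forall a b, ninv x a b -> S a b) -> (forall a b, ninv y a b -> S a b) ->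
    forall a b, ninv m a b -> S a b].

Lemma ninv_trans z (a b c : 'I_n) : ninv z a b -> ninv z b c -> ninv z a c.
Proof.
by move=> /andP[ab zab] /andP[bc zbc]; rewrite /ninv (ltn_trans ab bc) (ltn_trans zbc zab).
Qed.

Lemma SJ_exists x y : exists m, SJ x y m.
Proof.
exists (jperm x y); split.
- apply/weak_leP => a b /andP[ab xab]; rewrite jperm_inv; apply: Rj_TC.
  by rewrite /Rj ab xab.
- apply/weak_leP => a b /andP[ab xab]; rewrite jperm_inv; apply: Rj_TC.
  by rewrite /Rj ab xab orbT.
- move=> S St Sx Sy a b; rewrite jperm_inv; apply: TC_min => // p q /andP[pq /orP[] H].
    by apply: Sx; rewrite /ninv pq H.
  by apply: Sy; rewrite /ninv pq H.
Qed.

Lemma isJoinP x y m : isJoin J x y m <->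
  [/\ parabolic J m, weak_le x m, weak_le y m &
      forall z, parabolic J z -> weak_le x z -> weak_le y z -> weak_le m z].
Proof.
split => [/and4P[H1 H2 H3 /forallP H4] | [H1 H2 H3 H4]].
  by split => // z Pz xz yz; have /implyP := H4 z; apply; rewrite Pz xz yz.
apply/and4P; split => //; apply/forallP => z; apply/implyP => /andP[/andP[]].
exact: H4.
Qed.

Lemma isMeetP x y m : isMeet J x y m <->
  [/\ parabolic J m, weak_le m x, weak_le m y &
      forall z, parabolic J z -> weak_le z x -> weak_le z y -> weak_le z m].
Proof.
split => [/and4P[H1 H2 H3 /forallP H4] | [H1 H2 H3 H4]].
  by split => // z Pz xz yz; have /implyP := H4 z; apply; rewrite Pz xz yz.
apply/and4P; split => //; apply/forallP => z; apply/implyP => /andP[/andP[]].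
exact: H4.
Qed.

Lemma SJ_isJoin x y m : parabolic J x -> parabolic J y -> SJ x y m -> isJoin J x y m.
Proof.
move=> Px Py [xm ym Hm]; apply/isJoinP; split => //.
- pose S : rel 'I_n := fun a b => (a < b) && ~~ adjJ J a b.
  have St : forall a b c, S a b -> S b c -> S a c.
    move=> a b c /andP[ab _] /andP[bc _]; rewrite /S (ltn_trans ab bc) /=.
    apply/negP => /exists_inP[k _ /andP[/eqP E1 /eqP E2]]; move: ab bc; rewrite E1 E2; lia.
  have Sz : forall z, parabolic J z -> forall a b, ninv z a b -> S a b.
    move=> z Pz a b /andP[ab zba]; rewrite /S ab /=; apply/negP => adj.
    by have := parabolic_adj Pz adj; rewrite ltnNge (ltnW zba).
  apply: adj_parabolic => a b adj.
  have ab := adj_lt adj.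
  have ne : a != b by rewrite neq_ltn ab.
  case/orP: (perm_lt_total m ne) => // mba.
  have := Hm S St (Sz x Px) (Sz y Py) a b; rewrite /ninv ab mba /S adj andbF.
  by move/(_ isT).
- move=> z Pz xz yz; apply/weak_leP; apply: Hm.
  + exact: ninv_trans.
  + by apply/weak_leP.
  + by apply/weak_leP.
Qed.

Lemma isJoin_uniq x y m m' : isJoin J x y m -> isJoin J x y m' -> m = m'.
Proof.
move=> /isJoinP[P1 x1 y1 H1] /isJoinP[P2 x2 y2 H2].
by apply: weak_le_anti; [apply: H1 | apply: H2].
Qed.

Lemma isMeet_uniq x y m m' : isMeet J x y m -> isMeet J x y m' -> m = m'.
Proof.
move=> /isMeetP[P1 x1 y1 H1] /isMeetP[P2 x2 y2 H2].
by apply: weak_le_anti; [apply: H2 | apply: H1].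
Qed.

Lemma join_exists x y : parabolic J x -> parabolic J y -> exists m, isJoin J x y m.
Proof. by move=> Px Py; have [m Hm] := SJ_exists x y; exists m; apply: SJ_isJoin. Qed.

Lemma weak_le1 x : weak_le 1%g x.
Proof. by apply/weak_leP => a b /andP[ab]; rewrite !perm1 ltnNge (ltnW ab). Qed.

Lemma meet_exists x y : parabolic J x -> parabolic J y -> exists m, isMeet J x y m.
Proof.
move=> Px Py.
pose L := [pred z : 'S_n | parabolic J z && weak_le z x && weak_le z y].
have L1 : L 1%g by rewrite /L /= perm1_parabolic !weak_le1.
case: (arg_maxnP (@Ninv n) L1) => m /andP[/andP[Pm mx] my] Hmax.
exists m; apply/isMeetP; split => // z Pz zx zy.
have [j Hj] := SJ_exists m z.
have [mj zj Hjmin] := Hj.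
have Jj := SJ_isJoin Pm Pz Hj.
have /isJoinP[Pj _ _ _] := Jj.
have jx : weak_le j x.
  apply/weak_leP; apply: Hjmin; first exact: ninv_trans.
    by apply/weak_leP. by apply/weak_leP.
have jy : weak_le j y.
  apply/weak_leP; apply: Hjmin; first exact: ninv_trans.
    by apply/weak_leP. by apply/weak_leP.
have Nj : Ninv j <= Ninv m by apply: Hmax; rewrite /L /= Pj jx jy.
have sub : [set p : 'I_n * 'I_n | ninv m p.1 p.2] \subset [set p | ninv j p.1 p.2].
  by apply/subsetP => p; rewrite !inE; have /weak_leP := mj; apply.
have /eqP Eset : [set p : 'I_n * 'I_n | ninv m p.1 p.2] == [set p | ninv j p.1 p.2].
  by rewrite eqEcard sub.
apply/weak_leP => a b zab.
have : (a, b) \in [set p : 'I_n * 'I_n | ninv j p.1 p.2].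
  by rewrite inE /=; have /weak_leP := zj; apply.
by rewrite -Eset inE.
Qed.

End Join.


Section Cong.
Variable n : nat.
Variable J : {set 'I_n.-1}.
Implicit Types (u v w t x y z m : 'S_n).
Local Notation reg := (reg J).
Local Notation pi := (pi J).

Lemma lemmaC u w v t (i j k : 'I_n) : bad J w i j k -> weak_le (swp w i k) u ->
  SJ u w v -> avoid231 J t -> weak_le t v -> weak_le t u.
Proof.
move=> B cu [uv wv Hv] Ht tv.
have [ij jk rij rjk [wki wij E]] := bad_unpack B.
have ik := ltn_trans ij jk.
pose S : rel 'I_n := fun a b =>
  ninv u a b || (((a == i) || ninv u a i) && ((b == k) || ninv u k b)).
have St : forall a b d, S a b -> S b d -> S a d.
  move=> a b d /orP[Hab | /andP[Aa Bb]] /orP[Hbd | /andP[Ab Bd]].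
  - by rewrite /S (ninv_trans Hab Hbd).
  - apply/orP; right; rewrite Bd andbT.
    case/orP: Ab => [/eqP bi | Hbi]; first by rewrite -bi Hab orbT.
    by rewrite (ninv_trans Hab Hbi) orbT.
  - apply/orP; right; rewrite Aa /=.
    case/orP: Bb => [/eqP bk | Hkb]; first by rewrite -bk Hbd orbT.
    by rewrite (ninv_trans Hkb Hbd) orbT.
  - exfalso.
    have bi : b <= i by case/orP: Ab => [/eqP -> // | /andP[/ltnW]].
    have kb : k <= b by case/orP: Bb => [/eqP -> // | /andP[/ltnW]].
    by have := leq_trans kb bi; rewrite leqNgt ik.
have cuP := cu; move/weak_leP: cuP => cuP.
have Su : forall a b, ninv u a b -> S a b by move=> a b H; rewrite /S H.
have Sw : forall a b, ninv w a b -> S a b.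
  move=> a b Hab; case H: ((a == i) && (b == k)).
    by case/andP: H => /eqP -> /eqP ->; rewrite /S !eqxx orbT.
  by apply: Su; apply: cuP; rewrite swp_inv ?H.
have HtS : forall a b, ninv t a b -> S a b.
  move=> a b tab; apply: (Hv S St Su Sw); by have /weak_leP := tv; apply.
have ujk : ninv u j k.
  apply: cuP; rewrite swp_inv //.
    by rewrite /ninv jk (ltn_trans wki wij).
  by apply/negP => /andP[/eqP ji _]; move: ij; rewrite ji ltnn.
apply/weak_leP => a b tab.
case Uab: (ninv u a b) => //; exfalso.
have /orP[|/andP[Aa Bb]] := HtS a b tab; first by rewrite Uab.
have ai : a <= i by case/orP: Aa => [/eqP -> // | /andP[/ltnW]].
have kb : k <= b by case/orP: Bb => [/eqP -> // | /andP[/ltnW]].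
have /andP[ab tba] := tab.
have uab : u a < u b.
  have ne : a != b by rewrite neq_ltn ab.
  case/orP: (perm_lt_total u ne) => // uba.
  by move: Uab; rewrite /ninv ab uba.
have ubk : u b <= u k.
  case/orP: Bb => [/eqP -> // | /andP[_ /ltnW //]].
have /andP[_ ukj] := ujk.
have aj : a < j by apply: leq_ltn_trans ai ij.
have jb : j < b by apply: leq_trans jk kb.
have Saj : ~~ S a j.
  rewrite /S negb_or; apply/andP; split.
    rewrite /ninv aj /= -leqNgt; apply: ltnW; apply: (ltn_trans uab); exact: leq_ltn_trans ubk ukj.
  rewrite negb_and; apply/orP; right; rewrite negb_or; apply/andP; split.
    by apply/negP => /eqP jk'; move: jk; rewrite jk' ltnn.
  by rewrite /ninv ltnNge (ltnW jk).
have taj : t a < t j.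
  have ne : a != j by rewrite neq_ltn aj.
  case/orP: (perm_lt_total t ne) => // tja.
  by exfalso; move/negP: Saj; apply; apply: HtS; rewrite /ninv aj tja.
have raj : reg a < reg j by apply: leq_ltn_trans (reg_mono J ai) rij.
have rjb : reg j < reg b by apply: leq_trans rjk (reg_mono J kb).
have [p [rp tbp tpa]] := T_between Ht (leqnn _) aj jb raj rjb tba taj.
have ap : a < p by apply: (reg_lt (J:=J)); rewrite rp.
have pb : p < b by apply: (reg_lt (J:=J)); rewrite rp.
have pk : p < k by apply: (reg_lt (J:=J)); rewrite rp.
have ip : i < p by apply: (reg_lt (J:=J)); rewrite rp.
have uap : ninv u a p.
  case/orP: (HtS a p (introT andP (conj ap tpa))) => // /andP[_ /orP[/eqP pk' | /andP[kp _]]].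
    by move: pk; rewrite pk' ltnn.
  by move: (ltn_trans pk kp); rewrite ltnn.
have upb : ninv u p b.
  case/orP: (HtS p b (introT andP (conj pb tbp))) => // /andP[/orP[/eqP pi' | /andP[pi' _]] _].
    by move: ip; rewrite pi' ltnn.
  by move: (ltn_trans ip pi'); rewrite ltnn.
by move: Uab; rewrite (ninv_trans uap upb).
Qed.

Lemma join_pi_aux N x : Ninv x <= N -> parabolic J x ->
  forall z m1 m2, parabolic J z -> isJoin J x z m1 -> isJoin J (pi x) z m2 -> pi m1 = pi m2.
Proof.
elim: N x => [|N IH] x HN Px z m1 m2 Pz Hj1 Hj2; case Hav: (avoid231 J x).
- have Tx : T231 J x by rewrite /T231 Px Hav.
  by move: Hj2; rewrite pi_id // => Hj2; rewrite (isJoin_uniq Hj1 Hj2).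
- have [i [j [k B]]] := badP (negbT Hav).
  have [ij jk _ _ [_ _ E]] := bad_unpack B.
  by have := swp_N E (ltn_trans ij jk); lia.
- have Tx : T231 J x by rewrite /T231 Px Hav.
  by move: Hj2; rewrite pi_id // => Hj2; rewrite (isJoin_uniq Hj1 Hj2).
- have [i [j [k B]]] := badP (negbT Hav).
  have [ij jk rij rjk [_ _ E]] := bad_unpack B.
  have ik := ltn_trans ij jk.
  set c := swp x i k.
  have Nc : Ninv c < Ninv x := swp_N E ik.
  have Pc : parabolic J c := swp_parabolic E ik (ltn_trans rij rjk) Px.
  have pic : pi c = pi x := pi_swp Px B.
  have [u Hu] := SJ_exists c z.
  have Ju := SJ_isJoin Pc Pz Hu.
  have /isJoinP[Pu cu zu Humin] := Ju.
  have E1 : pi u = pi m2.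
    apply: (IH c ltac:(lia) Pc z u m2 Pz Ju); by rewrite pic.
  have [v Hv] := SJ_exists u x.
  have Jv := SJ_isJoin Pu Px Hv.
  have /isJoinP[Pv uv xv Hvmin] := Jv.
  have Jv' : isJoin J x z v.
    apply/isJoinP; split => //; first exact: weak_le_trans zu uv.
    move=> q Pq xq zq; apply: Hvmin => //.
    by apply: Humin => //; apply: weak_le_trans (swp_le E ik) xq.
  rewrite -(isJoin_uniq Jv' Hj1) -E1.
  apply: weak_le_anti; last exact: pi_mono.
  apply: pi_max => //; first exact: pi_T.
  apply: (lemmaC B cu Hv); last exact: pi_le.
  by case/andP: (pi_T Pv).
Qed.

Lemma join_pi x z m1 m2 : parabolic J x -> parabolic J z ->
  isJoin J x z m1 -> isJoin J (pi x) z m2 -> pi m1 = pi m2.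
Proof. by move=> Px Pz; apply: (join_pi_aux (leqnn _) Px). Qed.

End Cong.


Lemma meet_half (n : nat) (J : {set 'I_n.-1}) (x y z m1 m2 : 'S_n) :
  parabolic J x -> parabolic J y -> pi J x = pi J y ->
  isMeet J x z m1 -> isMeet J y z m2 -> weak_le (pi J m1) (pi J m2).
Proof.
move=> Px Py E /isMeetP[P1 m1x m1z _] /isMeetP[P2 m2y m2z H2].
apply: pi_max => //; first exact: pi_T.
apply: H2; first exact: pi_par.
  apply: weak_le_trans (pi_le Py); rewrite -E.
  exact: pi_mono m1x.
exact: weak_le_trans (pi_le P1) m1z.
Qed.

Theorem proposition3p18 (n : nat) (J : {set 'I_n.-1}) :
  (* Pi_down^J is well defined on S_n^J *)
  (forall w : 'S_n, parabolic J w -> exists p, isPiDown J w p) /\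
  (* S_n^J is a lattice for the weak order *)
  (forall x y : 'S_n, parabolic J x -> parabolic J y ->
     (exists m, isMeet J x y m) /\ (exists m, isJoin J x y m)) /\
  (* Theta is a lattice congruence *)
  (forall x y z m1 m2 : 'S_n, parabolic J x -> parabolic J y -> parabolic J z ->
     Theta J x y -> isMeet J x z m1 -> isMeet J y z m2 -> Theta J m1 m2) /\
  (forall x y z m1 m2 : 'S_n, parabolic J x -> parabolic J y -> parabolic J z ->
     Theta J x y -> isJoin J x z m1 -> isJoin J y z m2 -> Theta J m1 m2) /\
  (* the quotient lattice S_n^J / Theta is isomorphic to (S_n^J(231), weak order):
     f induces a bijection from Theta-classes onto S_n^J(231) which is an order
     isomorphism, where [x] <= [y] in the quotient iff (x /\ y) Theta x *)
  (exists f : 'S_n -> 'S_n,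
     (forall w, parabolic J w -> T231 J (f w)) /\
     (forall t, T231 J t -> exists w, parabolic J w /\ f w = t) /\
     (forall x y, parabolic J x -> parabolic J y -> (f x = f y <-> Theta J x y)) /\
     (forall x y m, parabolic J x -> parabolic J y -> isMeet J x y m ->
        (Theta J m x <-> weak_le (f x) (f y)))).
Proof.
split; first exact: pi_exists.
split; first by move=> x y Px Py; split; [apply: meet_exists | apply: join_exists].
split.
  move=> x y z m1 m2 Px Py Pz Th Hm1 Hm2.
  have /isMeetP[P1 _ _ _] := Hm1; have /isMeetP[P2 _ _ _] := Hm2.
  move: Th; rewrite !ThetaE // => /eqP E; apply/eqP.
  by apply: weak_le_anti; [apply: (meet_half Px Py E Hm1 Hm2) | apply: (meet_half Py Px (esym E) Hm2 Hm1)].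
split.
  move=> x y z m1 m2 Px Py Pz Th Hm1 Hm2.
  have /isJoinP[P1 _ _ _] := Hm1; have /isJoinP[P2 _ _ _] := Hm2.
  move: Th; rewrite !ThetaE // => /eqP E; apply/eqP.
  have [m Hm] := join_exists (pi_par Px) Pz.
  rewrite (join_pi Px Pz Hm1 Hm); apply: esym; apply: (join_pi Py Pz Hm2).
  by rewrite -E.
exists (pi J); split; first by move=> w; apply: pi_T.
split.
  move=> t Tt; exists t; split; first by case/andP: Tt.
  exact: pi_id.
split.
  by move=> x y Px Py; rewrite ThetaE //; split => [-> | /eqP].
move=> x y m Px Py Hm; have /isMeetP[Pm mx my Hmax] := Hm.
rewrite ThetaE //; split => [/eqP E | H].
  by rewrite -E; apply: pi_mono.
apply/eqP; apply: weak_le_anti; first exact: pi_mono.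
apply: pi_max => //; first exact: pi_T.
apply: Hmax; first exact: pi_par.
  exact: pi_le.
exact: weak_le_trans H (pi_le Py).
Qed.
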